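(* Let $A\in\mathbb{R}^{m\times n}$ with $i$-th row $a_i^T$, $b\in\mathbb{R}^m$, and consider the affine-ReLU function $F(x)=\mathrm{relu}(Ax+b)$ (ReLU applied entrywise, $\mathrm{relu}(t)=\max(0,t)$). Let $x_0\in\mathbb{R}^n$, $\epsilon\ge0$, $D=\mathrm{diag}(d_1,\dots,d_n)$ with $d_j\in\{0,1\}$, and $\mathcal{X}=\{x_0+D\Delta x:\ \|\Delta x\|\le\epsilon\}$. Let $y_0=Ax_0+b$, $\mathcal{Y}=\{Ax+b:x\in\mathcal{X}\}$, $\mathcal{Y}_i=\{y_i: y\in\mathcal{Y}\}$, and $\bar y_i=\max\mathcal{Y}_i$. Define $$r_i=\begin{cases}0,& \mathcal{Y}_i=\{y_{0,i}\},\\[2pt] \dfrac{\mathrm{relu}(\bar y_i)-\mathrm{relu}(y_{0,i})}{\bar y_i-y_{0,i}},&\text{otherwise},\end{cases}\qquad R=\mathrm{diag}(r_1,\dots,r_m).$$ Then the local Lipschitz constant of $F$ satisfies $$L(x_0,\mathcal{X})\le\|RAD\|,$$ where $\|RAD\|$ is the spectral norm.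
   Context: $\|\cdot\|$ is the Euclidean norm on vectors and the induced operator (spectral) norm on matrices. For $F:\mathbb{R}^n\to\mathbb{R}^m$, $x_0\in\mathbb{R}^n$ and $\mathcal{X}\subseteq\mathbb{R}^n$, the local Lipschitz constant is $L(x_0,\mathcal{X})=\sup_{x\in\mathcal{X},\,x\neq x_0}\frac{\|F(x)-F(x_0)\|}{\|x-x_0\|}$, with the convention that the supremum over an empty set is $0$. $y_i, y_{0,i}$ denote $i$-th entries. *)

(* Defs.v *)
From HB Require Import structures.
From mathcomp Require Import all_boot all_order all_algebra.
From mathcomp Require Import all_classical all_reals.
From mathcomp Require Import ereal.
Set Implicit Arguments. Unset Strict Implicit. Unset Printing Implicit Defensive.
Import Order.TTheory GRing.Theory Num.Theory.
Local Open Scope classical_set_scope.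
Local Open Scope ring_scope.

Section Defs.
Variable R : realType.

Definition enorm (k : nat) (v : 'cV[R]_k) : R :=
  Num.sqrt (\sum_(i < k) (v i 0) ^+ 2).

(* Spectral (induced operator) norm: sup of ||M v|| over ||v|| <= 1
   (a nonempty bounded set, so the real sup is the genuine supremum). *)
Definition opnorm (p q : nat) (M : 'M[R]_(p, q)) : R :=
  sup [set enorm (M *m v) | v in [set v : 'cV[R]_q | enorm v <= 1]].

Definition relu (t : R) : R := Num.max 0 t.

Definition relu_vec (k : nat) (y : 'cV[R]_k) : 'cV[R]_k := map_mx relu y.

(* local Lipschitz constant, extended-real valued (so an unbounded set gives
   +oo); the union with {0} implements the convention sup(empty) = 0
   (all ratios are >= 0, so it changes nothing when the set is nonempty). *)
Definition local_lip (p q : nat) (F : 'cV[R]_p -> 'cV[R]_q)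
    (x0 : 'cV[R]_p) (X : set 'cV[R]_p) : \bar R :=
  ereal_sup ([set 0%E] `|`
    [set ((enorm (F x - F x0)) / enorm (x - x0))%:E | x in [set x | X x /\ x <> x0]]).

Definition diag01 (n : nat) (d : 'I_n -> bool) : 'M[R]_n :=
  diag_mx (\row_j (d j)%:R).

Definition Xset (n : nat) (x0 : 'cV[R]_n) (D : 'M[R]_n) (eps : R) : set 'cV[R]_n :=
  [set x0 + D *m dx | dx in [set dx : 'cV[R]_n | enorm dx <= eps]].

Definition Yi (m n : nat) (A : 'M[R]_(m, n)) (b : 'cV[R]_m) (X : set 'cV[R]_n)
    (i : 'I_m) : set R :=
  [set (A *m x + b) i 0 | x in X].

(* r_i as in the paper; ybar_i = max Y_i is taken as sup Y_i (Y_i is compact,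
   so sup = max). *)
Definition rcoef (m n : nat) (A : 'M[R]_(m, n)) (b : 'cV[R]_m) (x0 : 'cV[R]_n)
    (X : set 'cV[R]_n) (i : 'I_m) : R :=
  let y0i := (A *m x0 + b) i 0 in
  let ybar := sup (Yi A b X i) in
  if `[< Yi A b X i = [set y0i] >] then 0
  else (relu ybar - relu y0i) / (ybar - y0i).

Definition Rmat (m n : nat) (A : 'M[R]_(m, n)) (b : 'cV[R]_m) (x0 : 'cV[R]_n)
    (X : set 'cV[R]_n) : 'M[R]_m :=
  diag_mx (\row_i rcoef A b x0 X i).

End Defs.

(* Main.v *)
Require Import Defs.
From HB Require Import structures.
From mathcomp Require Import all_boot all_order all_algebra.
From mathcomp Require Import all_classical all_reals.
From mathcomp Require Import ereal.
From mathcomp Require Import ring lra.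
Import Order.TTheory GRing.Theory Num.Theory.
Local Open Scope classical_set_scope.
Local Open Scope ring_scope.
Set Implicit Arguments. Unset Strict Implicit.

Section Aux.
Variable R : realType.

Lemma enorm_ge0 k (v : 'cV[R]_k) : 0 <= enorm v.
Proof. exact: sqrtr_ge0. Qed.

Lemma enorm_mono k (u w : 'cV[R]_k) :
  (forall i, `|u i 0| <= `|w i 0|) -> enorm u <= enorm w.
Proof.
move=> H; rewrite /enorm ler_sqrt; last by apply: sumr_ge0 => i _; exact: sqr_ge0.
apply: ler_sum => i _; rewrite -(real_normK (num_real (u i 0))) -(real_normK (num_real (w i 0))).
by rewrite lerXn2r // ?nnegrE.
Qed.

Lemma abs_le_enorm k (v : 'cV[R]_k) j : `|v j 0| <= enorm v.
Proof.
rewrite /enorm -sqrtr_sqr ler_sqrt; last by apply: sumr_ge0 => i _; exact: sqr_ge0.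
rewrite (bigD1 j) //= lerDl; apply: sumr_ge0 => i _; exact: sqr_ge0.
Qed.

Lemma enormZ k (c : R) (v : 'cV[R]_k) : enorm (c *: v) = `|c| * enorm v.
Proof.
rewrite /enorm (eq_bigr (fun i => c ^+ 2 * v i 0 ^+ 2)); last first.
  by move=> i _; rewrite mxE exprMn.
by rewrite -mulr_sumr sqrtrM ?sqr_ge0 // sqrtr_sqr.
Qed.

Lemma enormN k (v : 'cV[R]_k) : enorm (- v) = enorm v.
Proof. by rewrite -scaleN1r enormZ normrN normr1 mul1r. Qed.

Lemma enorm0 k : enorm (0 : 'cV[R]_k) = 0.
Proof.
by rewrite /enorm big1 ?sqrtr0 // => i _; rewrite mxE expr0n.
Qed.

Lemma enorm_eq0 k (v : 'cV[R]_k) : enorm v = 0 -> v = 0.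
Proof.
move=> /eqP; rewrite sqrtr_eq0 => H.
have H0 : \sum_(i < k) v i 0 ^+ 2 = 0.
  by apply/eqP; rewrite eq_le H; apply: sumr_ge0 => i _; exact: sqr_ge0.
apply/matrixP => i j; rewrite (ord1 j) mxE.
have := @psumr_eq0P _ _ _ _ (fun i _ => sqr_ge0 (v i 0)) H0 i isT.
by move/eqP; rewrite sqrf_eq0 => /eqP.
Qed.

Lemma entry_bound p q (M : 'M[R]_(p, q)) (v : 'cV[R]_q) i :
  `|(M *m v) i 0| <= (\sum_j `|M i j|) * enorm v.
Proof.
rewrite mxE mulr_suml; apply: (le_trans (ler_norm_sum _ _ _)).
apply: ler_sum => j _; rewrite normrM; apply: ler_wpM2l => //.
exact: abs_le_enorm.
Qed.


Lemma opnorm_has_sup p q (M : 'M[R]_(p, q)) :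
  has_sup [set enorm (M *m v) | v in [set v : 'cV[R]_q | enorm v <= 1]].
Proof.
split.
  by exists (enorm (M *m 0)), 0 => //=; rewrite enorm0.
exists (enorm (\col_i (\sum_j `|M i j|) : 'cV[R]_p)).
move=> _ [v /= hv <-]; apply: enorm_mono => i.
rewrite mxE; apply: (le_trans (entry_bound M v i)).
rewrite ger0_norm ?sumr_ge0 // ler_piMr ?sumr_ge0 //.
Qed.

Lemma opnorm_ge0 p q (M : 'M[R]_(p, q)) : 0 <= opnorm M.
Proof.
have := ub_le_sup (proj2 (opnorm_has_sup M)); apply.
by exists 0 => //=; rewrite ?enorm0 // mulmx0 enorm0.
Qed.

Lemma opnorm_bound p q (M : 'M[R]_(p, q)) w :
  enorm (M *m w) <= opnorm M * enorm w.
Proof.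
have [/enorm_eq0 ->|nz] := eqVneq (enorm w) 0.
  by rewrite mulmx0 !enorm0 mulr0.
have pos : 0 < enorm w by rewrite lt_def nz enorm_ge0.
rewrite -ler_pdivrMr //.
have -> : enorm (M *m w) / enorm w = enorm (M *m ((enorm w)^-1 *: w)).
  by rewrite -scalemxAr enormZ ger0_norm ?invr_ge0 ?enorm_ge0 // mulrC.
apply: (ub_le_sup (proj2 (opnorm_has_sup M))).
exists ((enorm w)^-1 *: w) => //=.
by rewrite enormZ ger0_norm ?invr_ge0 ?enorm_ge0 // mulVf.
Qed.


Lemma relu_pos (t : R) : 0 <= t -> relu t = t.
Proof. move=> h; rewrite /relu. exact/max_idPr. Qed.
Lemma relu_neg (t : R) : t < 0 -> relu t = 0.
Proof. move=> h; rewrite /relu. exact/max_idPl/ltW. Qed.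
Lemma relu_sec (y0 yb y : R) : y0 < yb -> y <= yb ->
  `|relu y - relu y0| <= (relu yb - relu y0) / (yb - y0) * `|y - y0|.
Proof.
move=> h1 h2; rewrite mulrAC ler_pdivlMr ?subr_gt0 //.
have [d|d] := lerP 0 (y - y0); rewrite ?(ger0_norm d) ?(ltr0_norm d);
have [e|e] := lerP 0 (relu y - relu y0); rewrite ?(ger0_norm e) ?(ltr0_norm e);
move: e;
have [a|a] := lerP 0 y; rewrite ?(relu_pos a) ?(relu_neg a);
have [b|b] := lerP 0 y0; rewrite ?(relu_pos b) ?(relu_neg b);
have [c|c] := lerP 0 yb; rewrite ?(relu_pos c) ?(relu_neg c); move=> e;
nra.
Qed.

Lemma relu_le (a c : R) : a <= c -> relu a <= relu c.
Proof.
move=> h; have [x|x] := lerP 0 a; have [y|y] := lerP 0 c;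
rewrite ?(relu_pos x) ?(relu_neg x) ?(relu_pos y) ?(relu_neg y); lra.
Qed.

Lemma ylin m n (A : 'M[R]_(m, n)) (b : 'cV[R]_m) x0 (w : 'cV[R]_n) i :
  (A *m (x0 + w) + b) i 0 = (A *m x0 + b) i 0 + (A *m w) i 0.
Proof. by rewrite mulmxDr !mxE; ring. Qed.

Lemma DD n (d : 'I_n -> bool) (v : 'cV[R]_n) :
  diag01 R d *m (diag01 R d *m v) = diag01 R d *m v.
Proof.
apply/matrixP => i j; rewrite /diag01 !mul_diag_mx !mxE.
by case: (d i); rewrite ?mul1r ?mul0r.
Qed.


Lemma entry_le m n (A : 'M[R]_(m, n)) (b : 'cV[R]_m) x0 eps (d : 'I_n -> bool)
  (dx : 'cV[R]_n) i : enorm dx <= eps ->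
  `|relu ((A *m x0 + b) i 0 + (A *m (diag01 R d *m dx)) i 0) - relu ((A *m x0 + b) i 0)|
  <= `|rcoef A b x0 (Xset x0 (diag01 R d) eps) i * (A *m (diag01 R d *m dx)) i 0|.
Proof.
move=> hdx.
set D := diag01 R d; set X := Xset x0 D eps; set y0 := (A *m x0 + b) i 0.
set t := (A *m (D *m dx)) i 0.
have memY : forall dx', enorm dx' <= eps -> Yi A b X i (y0 + (A *m (D *m dx')) i 0).
  move=> dx' h; exists (x0 + D *m dx'); first by exists dx'.
  by rewrite ylin.
have invY : forall z, Yi A b X i z -> exists dx', enorm dx' <= eps /\ z = y0 + (A *m (D *m dx')) i 0.
  by move=> z [_ [dx' h <-] <-]; exists dx'; rewrite ylin.
have eps0 : 0 <= eps by apply: le_trans hdx; exact: enorm_ge0.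
rewrite /rcoef -/y0; case: asboolP => [Hs | Hn].
  have := memY dx hdx; rewrite Hs /= => /(congr1 (fun z => z - y0)).
  rewrite addrAC subrr add0r -/t => ->; rewrite addr0 subrr mul0r normr0 //.
set ybar := sup _.
have hs : has_sup (Yi A b X i).
  split; first by exists (y0 + t); exact: memY.
  exists (y0 + (\sum_j `|(A *m D) i j|) * eps) => z /invY [dx' [h ->]].
  rewrite lerD2l mulmxA; apply: le_trans (ler_norm _) _.
  apply: le_trans (entry_bound _ _ _) _; apply: ler_wpM2l => //.
  by apply: sumr_ge0 => j _.
have ub : forall z, Yi A b X i z -> z <= ybar by move=> z; exact: sup_upper_bound.
have lt0 : y0 < ybar.
  rewrite ltNge; apply/negP => le; apply: Hn; apply/seteqP; split => z.
    move=> /invY [dx' [h ->]] /=.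
    have h1 := ub _ (memY _ h).
    have h2 : enorm (- dx') <= eps by rewrite enormN.
    have h3 := ub _ (memY _ h2).
    rewrite !mulmxN mxE in h3.
    apply/eqP; rewrite -subr_eq0 addrAC subrr add0r; apply/eqP; lra.
  move=> /= ->; have h0 : enorm (0 : 'cV[R]_n) <= eps by rewrite enorm0.
  by have := memY _ h0; rewrite !mulmx0 mxE addr0.
have := relu_sec lt0 (ub _ (memY _ hdx)); rewrite -/t.
rewrite [y0 + t]addrC addrK normrM => H; apply: le_trans H _.
rewrite ler_wpM2r // ger0_norm //.
by apply: divr_ge0; rewrite subr_ge0 ?relu_le // ltW.
Qed.

End Aux.

Theorem theorem2 (R : realType) (m n : nat) (A : 'M[R]_(m, n)) (b : 'cV[R]_m)
    (x0 : 'cV[R]_n) (eps : R) (d : 'I_n -> bool) :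
  0 <= eps ->
  (local_lip (fun x : 'cV[R]_n => relu_vec (A *m x + b)) x0
     (Xset x0 (diag01 R d) eps)
   <= (opnorm (Rmat A b x0 (Xset x0 (diag01 R d) eps) *m A *m diag01 R d))%:E)%E.
Proof.
move=> heps; apply: ge_ereal_sup => z [-> | [x [[dx hdx <-] neq] <-]].
  by rewrite lee_fin opnorm_ge0.
rewrite lee_fin.
set D := diag01 R d; set X := Xset x0 D eps; set M := _ *m D.
have -> : x0 + D *m dx - x0 = D *m dx by rewrite addrC addKr.
have nz : enorm (D *m dx) != 0.
  apply/eqP => /enorm_eq0 h; apply: neq; by rewrite h addr0.
have pos : 0 < enorm (D *m dx) by rewrite lt_def nz enorm_ge0.
rewrite ler_pdivrMr //.
apply: le_trans (opnorm_bound M (D *m dx)).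
apply: enorm_mono => i.
have E1 : (relu_vec (A *m (x0 + D *m dx) + b) - relu_vec (A *m x0 + b)) i 0
   = relu ((A *m x0 + b) i 0 + (A *m (D *m dx)) i 0) - relu ((A *m x0 + b) i 0).
  by rewrite -ylin !mxE.
have E2 : (M *m (D *m dx)) i 0 = rcoef A b x0 X i * (A *m (D *m dx)) i 0.
  by rewrite /M -!mulmxA DD /Rmat mul_diag_mx mxE [_ 0 i]mxE.
rewrite E1 E2; exact: entry_le.
Qed.
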